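(* Let $k,n$ be integers with $2\le k\le n-2$. Then, as polynomials in $t$, $$i(\mathrm{Sp}_{k,n},t)=i(\mathrm{Sp}_{n-k,n},t)=i(U_{k,n},t)-i(T_{k,n},t-1).$$
   Context: For $S,T\subseteq[n]$, write $T\le S$ if $|T|=|S|$ and the $i$-th smallest element of $T$ is at most the $i$-th smallest element of $S$ for each $i$. The Schubert matroid $\mathrm{SM}_n(S)$ is the matroid on $[n]$ with bases $\{T\subseteq[n]:T\le S\}$. For a matroid $M$ on $[n]$, $i(M,t)$ is the Ehrhart polynomial of its matroid polytope $\mathrm{conv}\{\sum_{b\in B}e_b: B\text{ a basis}\}$ (the polynomial counting lattice points in the $t$-th dilate for positive integers $t$), and $i(M,t-1)$ is this polynomial evaluated at $t-1$. $U_{k,n}=\mathrm{SM}_n(\{n-k+1,\dots,n\})$; $T_{k,n}=\mathrm{SM}_n(\{2,3,\dots,k,n\})$; $\mathrm{Sp}_{k,n}=\mathrm{SM}_n(\{k\}\cup\{k+2,\dots,n\})$. *)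

(* Defs.v *)
From HB Require Import structures.
From mathcomp Require Import all_boot all_order all_algebra.
Set Implicit Arguments. Unset Strict Implicit. Unset Printing Implicit Defensive.
Import Order.TTheory GRing.Theory Num.Theory.
Local Open Scope ring_scope.

(* Ground set [n] = {1,...,n} is modelled by 'I_n, element i : 'I_n standing
   for i.+1.  A "matroid" is given by its family of bases, a predicate on
   {set 'I_n}. *)

Definition sorted_elems (n : nat) (T : {set 'I_n}) : seq nat :=
  sort leq [seq (val i).+1 | i <- enum T].

Definition gale_le (n : nat) (T S : {set 'I_n}) : bool :=
  (#|T| == #|S|)%N && all2 leq (sorted_elems T) (sorted_elems S).

Definition SM (n : nat) (S : {set 'I_n}) : pred {set 'I_n} :=
  fun T => gale_le T S.

Definition Ukn (k n : nat) : pred {set 'I_n} :=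
  SM [set i : 'I_n | (n - k + 1 <= (val i).+1)%N].
Definition Tkn (k n : nat) : pred {set 'I_n} :=
  SM [set i : 'I_n | (2 <= (val i).+1 <= k)%N || ((val i).+1 == n)].
Definition Spkn (k n : nat) : pred {set 'I_n} :=
  SM [set i : 'I_n | ((val i).+1 == k) || (k + 2 <= (val i).+1)%N].

(* x : Z^n lies in the t-th dilate of the matroid polytope
   conv{ e_B : B basis }: x = sum_B lam_B e_B with lam_B >= 0 and
   sum_B lam_B = t. *)
Definition in_dilate (n : nat) (bases : pred {set 'I_n}) (t : nat)
    (x : {ffun 'I_n -> int}) : Prop :=
  exists lam : {set 'I_n} -> rat,
    (forall B, 0 <= lam B) /\
    (\sum_(B | bases B) lam B = t%:R) /\
    (forall i : 'I_n, (x i)%:~R = \sum_(B | bases B) lam B * (i \in B)%:R).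

Definition lattice_count (n : nat) (bases : pred {set 'I_n}) (t c : nat)
  : Prop :=
  exists s : seq {ffun 'I_n -> int},
    uniq s /\ (forall x, x \in s <-> in_dilate bases t x) /\ size s = c.

Definition ehrhart_poly (n : nat) (bases : pred {set 'I_n}) (p : {poly rat})
  : Prop :=
  forall t : nat, (0 < t)%N ->
    exists c : nat, lattice_count bases t c /\ p.[t%:R] = c%:R.

Arguments Ukn k n : clear implicits.
Arguments Tkn k n : clear implicits.
Arguments Spkn k n : clear implicits.

(* Main.v *)
Require Import Defs.
From HB Require Import structures.
From mathcomp Require Import all_boot all_order all_algebra.
From mathcomp Require Import zify.
Set Implicit Arguments. Unset Strict Implicit. Unset Printing Implicit Defensive.
Fixpoint box (d t : nat) : seq (seq nat) :=
  if d is d'.+1 then [seq v :: y | v <- iota 0 t.+1, y <- box d' t] else [:: [::]].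

Lemma boxS d t : box d.+1 t = [seq v :: y | v <- iota 0 t.+1, y <- box d t].
Proof. by []. Qed.

Definition cntF d t N := \sum_(y <- box d t) (sumn y == N).

Lemma cntF_rec d t N : cntF d.+1 t N = \sum_(v < t.+1 | v <= N) cntF d t (N - v).
Proof.
rewrite /cntF boxS big_allpairs_dep -(big_mkord (fun v => v <= N) (fun v => cntF d t (N - v))) /index_iota subn0 [RHS]big_mkcond /=.
apply: eq_bigr => v _; case: ifP => hv.
  by apply: eq_bigr => y _; congr nat_of_bool; apply/eqP/eqP; lia.
by rewrite big1 // => y _; case: eqP => //; lia.
Qed.

Lemma cntF0 t N : cntF 0 t N = (N == 0).
Proof. by rewrite /cntF /= big_seq1 eq_sym. Qed.

Lemma cntF_zero d t : cntF d t 0 = 1.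
Proof.
elim: d => [|d IH]; first by rewrite cntF0.
rewrite cntF_rec big_mkcond big_ord_recl /= IH big1 ?addn0 // => i _.
Qed.

Lemma cntF_big d t N : d * t < N -> cntF d t N = 0.
Proof.
elim: d N => [|d IH] N hN; first by rewrite cntF0; case: N hN.
rewrite cntF_rec big1 // => v hv; apply: IH.
have := ltn_ord v; rewrite mulSn in hN; lia.
Qed.

Lemma cntF_bound1 d t N : N <= t -> cntF d t N = cntF d t.+1 N.
Proof.
elim: d N => [|d IH] N hN; first by rewrite !cntF0.
rewrite !cntF_rec big_mkcond [RHS]big_mkcond [RHS]big_ord_recr /= leqNgt ltnS hN /= addn0.
apply: eq_bigr => v _; case: ifP => // hv; rewrite IH //; lia.
Qed.

Lemma cntF_bound d t j N : N <= t -> cntF d t N = cntF d (t + j) N.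
Proof.
move=> h; elim: j => [|j IH]; first by rewrite addn0.
by rewrite IH addnS cntF_bound1 //; lia.
Qed.

Lemma cntF_sym d t N : N <= d * t -> cntF d t N = cntF d t (d * t - N).
Proof.
elim: d N => [|d IH] N hN; first by rewrite mul0n in hN *; move: hN; rewrite leqn0 => /eqP->.
rewrite !cntF_rec big_mkcond [RHS]big_mkcond /= [RHS](reindex_inj rev_ord_inj) /=.
rewrite mulSn in hN *.
apply: eq_bigr => v _; have hvt := ltn_ord v.
case: (leqP v N) => hv.
  case: (leqP (N - v) (d*t)) => h2.
    rewrite ifT; last by lia.
    rewrite IH //; congr cntF; lia.
  rewrite ifF ?cntF_big //; apply/negbTE; rewrite -ltnNge; lia.
rewrite ifT; last by lia.
rewrite cntF_big //; lia.
Qed.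

Lemma mem_box d t y : (y \in box d t) = (size y == d) && all (fun v => v <= t) y.
Proof.
elim: d y => [|d IH] y; first by case: y.
rewrite boxS; apply/allpairsP/idP.
  case=> [[v z] [hv hz ->]]; move: hz hv; rewrite IH mem_iota /= => /andP[/eqP-> ->] hv.
  by rewrite eqxx andbT; lia.
case: y => [|v y] //= /andP[hs /andP[hv ha]]; exists (v, y).
split; [by rewrite /= in_cons mem_iota; case: v hv => // v; lia | by rewrite IH; rewrite eqSS in hs; rewrite hs ha | by []].
Qed.

Lemma size_box d t y : y \in box d t -> size y = d.
Proof. by rewrite mem_box => /andP[/eqP]. Qed.

Lemma big_box_cat a b t (F : seq nat -> nat) :
  \sum_(y <- box (a + b) t) F y = \sum_(y1 <- box a t) \sum_(y2 <- box b t) F (y1 ++ y2).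
Proof.
elim: a F => [|a IH] F; first by rewrite add0n /= big_seq1.
rewrite addSn !boxS !big_allpairs_dep; apply: eq_bigr => v _.
by rewrite (IH (fun y => F (v :: y))).
Qed.

Lemma big_group (T : Type) (s : seq T) (f : T -> nat) (G : nat -> nat) M :
  (forall v, M <= v -> G v = 0) ->
  \sum_(y <- s) G (f y) = \sum_(v < M) (\sum_(y <- s) (f y == v)) * G v.
Proof.
move=> hG; under [RHS]eq_bigr do rewrite big_distrl /=.
rewrite exchange_big /=; apply: eq_bigr => y _.
case: (ltnP (f y) M) => h.
  rewrite (bigD1 (Ordinal h)) //= eqxx mul1n big1 ?addn0 // => v hv.
  rewrite (_ : (f y == v) = false) ?mul0n //; apply/negbTE; apply: contra hv => /eqP e.
  by apply/eqP/val_inj.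
rewrite hG // big1 // => v _; rewrite (_ : (f y == v) = false) ?mul0n //.
by apply/negbTE; have := ltn_ord v; lia.
Qed.

Definition Cnt a b t N L := \sum_(N1 < N.+1 | L <= N1) cntF a t N1 * cntF b t (N - N1).

Lemma count_fam a b t N L :
  \sum_(y <- box (a + b) t) ((sumn y == N) && (L <= sumn (take a y))) = Cnt a b t N L.
Proof.
rewrite big_box_cat.
rewrite (eq_big_seq (fun y1 => (L <= sumn y1) * (sumn y1 <= N) * cntF b t (N - sumn y1))); last first.
  move=> y1 hy1; rewrite /cntF big_distrr /=; apply: eq_bigr => y2 _.
  rewrite take_size_cat ?(size_box hy1) // sumn_cat.
  case: (leqP L (sumn y1)); case: (leqP (sumn y1) N) => h1 h2 /=; rewrite ?mul1n ?mul0n ?andbT ?andbF //.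
    by congr nat_of_bool; apply/eqP/eqP; lia.
  by case: eqP => //; lia.
rewrite (@big_group _ _ _ (fun s => (L <= s) * (s <= N) * cntF b t (N - s)) N.+1); last first.
  by move=> v hv; rewrite (_ : (v <= N) = false) ?muln0 ?mul0n //; apply/negbTE; lia.
rewrite /Cnt [RHS]big_mkcond /=; apply: eq_bigr => v _; rewrite -/(cntF a t v).
have := ltn_ord v; rewrite ltnS => ->; rewrite muln1.
by case: (L <= v); rewrite ?mul1n ?mul0n ?muln0.
Qed.

Lemma conv a b t N : cntF (a + b) t N = Cnt a b t N 0.
Proof.
rewrite -count_fam /cntF; apply: eq_bigr => y _; by rewrite leq0n andbT.
Qed.

Lemma widen_vanish (F : nat -> nat) (P : pred nat) X Y : X <= Y ->
  (forall i, X < i -> F i = 0) ->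
  \sum_(i < X.+1 | P i) F i = \sum_(i < Y.+1 | P i) F i.
Proof.
move=> hXY hF; rewrite (big_ord_widen_cond Y.+1 P F) //.
rewrite big_mkcond [RHS]big_mkcond; apply: eq_bigr => i _.
case: (P i) => //=; case: ltnP => // h; rewrite hF //.
Qed.

Definition Tsum k b t := \sum_(w < t.+1) cntF k t w * cntF b t w.

Lemma I3 k b t : 0 < k -> Cnt k b t (k*t) ((k-1)*t) = Tsum k b t.
Proof.
move=> hk; rewrite /Cnt /Tsum (reindex_inj rev_ord_inj) /=.
rewrite [RHS](big_ord_widen (k*t).+1 (fun w => cntF k t w * cntF b t w)); last first.
  by rewrite ltnS leq_pmull.
apply: eq_big => [w | w hw]; have := ltn_ord w => hw'.
  rewrite /= mulnBl mul1n; apply/idP/idP; lia.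
rewrite subSS cntF_sym; last lia.
rewrite subKn; last lia.
rewrite (cntF_sym (d := k)); last lia.
by [].
Qed.

Lemma I1 k b t : Cnt k b t (b*t) t = Cnt b k t (k*t) t.
Proof.
have E1 : Cnt k b t (b*t) t = \sum_(i < (b*t).+1 | t <= i) cntF k t i * cntF b t i.
  apply: eq_bigr => i _; have hi : i <= b * t by rewrite -ltnS ltn_ord.
  by rewrite (cntF_sym hi).
have E2 : Cnt b k t (k*t) t = \sum_(i < (k*t).+1 | t <= i) cntF k t i * cntF b t i.
  apply: eq_bigr => i _; have hi : i <= k * t by rewrite -ltnS ltn_ord.
  by rewrite (cntF_sym hi) mulnC.
rewrite E1 E2 (@widen_vanish (fun i => cntF k t i * cntF b t i) (fun i => t <= i) (b*t) (b*t + k*t)); last first.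
- by move=> i hi; rewrite [cntF b t i]cntF_big ?muln0.
- by rewrite leq_addr.
rewrite (@widen_vanish (fun i => cntF k t i * cntF b t i) (fun i => t <= i) (k*t) (b*t + k*t)); last first.
- by move=> i hi; rewrite [cntF k t i]cntF_big ?mul0n.
- by rewrite leq_addl.
by [].
Qed.

Lemma I2 k b t : 0 < k ->
  cntF (b + k) t.+1 (k * t.+1) = Cnt b k t.+1 (k * t.+1) t.+1 + Tsum k b t.
Proof.
move=> hk; rewrite conv /Cnt (bigID (fun M : 'I_(k * t.+1).+1 => t.+1 <= M)) /=.
congr addn.
rewrite /Tsum (big_ord_widen (k * t.+1).+1 (fun w => cntF k t w * cntF b t w)); last first.
  exact: leq_trans (leq_pmull _ hk) (leqnSn _).
apply: eq_big => [i | i hi]; first by rewrite -leqNgt ltnS.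
have hi' : i <= t by rewrite leqNgt.
have hik : i <= k * t.+1 by rewrite -ltnS ltn_ord.
rewrite -(cntF_sym hik) mulnC; move: hi'; move: (nat_of_ord i) => j hj.
by rewrite -(addn1 t) -!(cntF_bound _ 1 hj).
Qed.

Lemma cntF_split d t c s : 0 < s <= t ->
  cntF d.+1 t (c*t+s) = \sum_(u < s) cntF d t (c*t + u.+1) +
     (if c is c'.+1 then \sum_(s <= u < t.+1) cntF d t (c'*t + u) else 1).
Proof.
move=> /andP[hs hst].
rewrite cntF_rec big_mkcond -(big_mkord (fun _ => true) (fun v => if v <= c*t+s then cntF d t (c*t+s - v) else 0)).
rewrite (@big_cat_nat _ _ _ s) //=; last by lia.
congr addn.
  rewrite big_nat_rev /= -(big_mkord (fun _ => true) (fun u => cntF d t (c*t + u.+1))).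
  apply: eq_big_nat => u hu; rewrite ifT; last by lia.
  congr cntF; lia.
case: c => [|c].
  rewrite big_ltn ?ltnS // mul0n add0n leqnn subnn cntF_zero big1_seq ?addn0 // => v /andP[_].
  by rewrite mem_index_iota => hv; rewrite ifF //; lia.
rewrite big_nat_rev /=; apply: eq_big_nat => u hu; rewrite ifT; last by rewrite mulSn; lia.
congr cntF; rewrite mulSn; lia.
Qed.
Lemma all_ge_count a j (s : seq nat) : all (fun x => a <= x) s -> j < a ->
  count (fun v => v <= j) s = 0.
Proof.
move=> ha hj; apply/eqP; rewrite -leqn0 leqNgt -has_count; apply/hasP => -[x hx hxj].
by move/allP: ha => /(_ x hx); lia.
Qed.

Lemma all2_count (s1 s2 : seq nat) : sorted leq s1 -> sorted leq s2 -> size s1 = size s2 ->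
  all2 leq s1 s2 <-> forall j, count (fun v => v <= j) s2 <= count (fun v => v <= j) s1.
Proof.
elim: s1 s2 => [|a s1 IH] [|b s2] //= h1 h2 [hs].
have m1 := order_path_min leq_trans h1; have m2 := order_path_min leq_trans h2.
have t1 := path_sorted h1; have t2 := path_sorted h2.
split.
  move=> /andP[hab /(IH _ t1 t2 hs) H] j; have := H j.
  case: (leqP b j); case: (leqP a j) => //=; lia.
move=> H; have hab : a <= b.
  case: (leqP a b) => // hba; have := H b.
  rewrite leqnn (all_ge_count m1 hba); case: leqP => //; lia.
rewrite hab /=; apply/(IH _ t1 t2 hs) => j.
case: (ltnP j b) => hj; first by rewrite (all_ge_count m2 hj).
have := H j; rewrite hj (leq_trans hab hj) /=; lia.
Qed.

Definition pre n j : {set 'I_n} := [set i : 'I_n | i < j].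
Arguments pre : clear implicits.

Lemma count_enum_set n (T : {set 'I_n}) (p : pred 'I_n) :
  count p (enum T) = #|[set i in T | p i]|.
Proof.
rewrite -size_filter.
have /card_uniqP <- : uniq (filter p (enum T)) by rewrite filter_uniq ?enum_uniq.
by apply: eq_card => i; rewrite mem_filter mem_enum !inE andbC.
Qed.

Lemma size_se n (T : {set 'I_n}) : size (sorted_elems T) = #|T|.
Proof. by rewrite /sorted_elems size_sort size_map cardE. Qed.

Lemma count_se n (T : {set 'I_n}) j :
  count (fun v => v <= j) (sorted_elems T) = #|T :&: pre n j|.
Proof.
rewrite /sorted_elems count_sort count_map count_enum_set.
by apply: eq_card => i; rewrite !inE.
Qed.

Lemma gale_char n (T S : {set 'I_n}) :
  gale_le T S <-> #|T| = #|S| /\ forall j, #|S :&: pre n j| <= #|T :&: pre n j|.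
Proof.
rewrite /gale_le; split.
  move=> /andP[/eqP hc ha]; split => // j.
  move: ha; rewrite all2_count ?sort_sorted //; last by rewrite !size_se.
  by move=> /(_ j); rewrite !count_se.
move=> [hc hj]; rewrite hc eqxx /= all2_count ?sort_sorted //; last by rewrite !size_se.
by move=> j; rewrite !count_se.
Qed.

Definition itv n lo hi : {set 'I_n} := [set i : 'I_n | lo <= i < hi].
Arguments itv : clear implicits.

Lemma card_setP n (P : pred nat) : #|[set i : 'I_n | P i]| = count P (iota 0 n).
Proof.
have := count_enum_set [set: 'I_n] (fun i => P (val i)).
rewrite enum_setT -enumT -val_enum_ord count_map => ->.
by apply: eq_card => i; rewrite !inE.
Qed.

Lemma card_itv n lo hi : #|itv n lo hi| = minn hi n - lo.
Proof.
rewrite /itv (@card_setP n (fun x => lo <= x < hi)); elim: n => [|n IH]; first by rewrite /= minn0.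
rewrite -addn1 iotaD count_cat IH /= addn0 add0n.
case: (leqP lo n); case: (ltnP n hi) => /= h1 h2; lia.
Qed.

Lemma card_sub n (A B : {set 'I_n}) : A \subset B -> #|A| <= #|B|.
Proof. exact: subset_leq_card. Qed.

Lemma card_U n (A B : {set 'I_n}) : #|A :|: B| <= #|A| + #|B|.
Proof. by rewrite -cardsUI leq_addr. Qed.

Definition GS n a m r : {set 'I_n} := [set i : 'I_n | (a - m <= i < a) || (n - (r - m) <= i)].
Arguments GS : clear implicits.
Definition FamB n r a m : pred {set 'I_n} := fun B => (#|B| == r) && (m <= #|B :&: pre n a|).
Arguments FamB : clear implicits.

Lemma card_GS n a m r : m <= a -> m <= r -> a + (r - m) <= n -> #|GS n a m r| = r.
Proof.
move=> h1 h2 h3.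
have -> : GS n a m r = itv n (a - m) a :|: itv n (n - (r - m)) n.
  by apply/setP => i; rewrite !inE ltn_ord andbT.
rewrite cardsU (_ : itv n (a - m) a :&: itv n (n - (r - m)) n = set0).
  by rewrite cards0 subn0 !card_itv minnn; lia.
by apply/setP => i; rewrite !inE; apply/negbTE; lia.
Qed.

Lemma card_Tpre n (T : {set 'I_n}) j : #|T| - (n - j) <= #|T :&: pre n j|.
Proof.
have := cardsID (pre n j) T; have := card_sub (subsetDr T (pre n j)).
have := cardsC (pre n j); rewrite card_ord.
have -> : pre n j = itv n 0 j by apply/setP => i; rewrite !inE.
rewrite card_itv; lia.
Qed.

Lemma SM_GS n a m r : m <= a -> m <= r -> a + (r - m) <= n ->
  SM (GS n a m r) =1 FamB n r a m.
Proof.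
move=> h1 h2 h3 T; rewrite /SM /FamB; apply/idP/idP.
  move/gale_char => [hc hj]; rewrite hc card_GS // eqxx /=.
  apply: leq_trans (hj a); apply: leq_trans (card_sub (_ : itv n (a - m) a \subset _)).
    by rewrite card_itv; lia.
  by apply/subsetP => i; rewrite !inE => /andP[-> ->].
move=> /andP[/eqP hc hm]; apply/gale_char; rewrite card_GS //; split => // j.
have hT := card_Tpre T j.
case: (leqP j a) => hja.
  have hS : #|GS n a m r :&: pre n j| <= j - (a - m).
    apply: leq_trans (card_sub (_ : GS n a m r :&: pre n j \subset itv n (a - m) j)) _.
      by apply/subsetP => i; rewrite !inE; lia.
    by rewrite card_itv; lia.
  have hTa : #|T :&: pre n a| <= #|T :&: pre n j| + (a - j).
    apply: leq_trans (card_sub (_ : T :&: pre n a \subset (T :&: pre n j) :|: itv n j a)) _.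
      by apply/subsetP => i; rewrite !inE; lia.
    by apply: leq_trans (card_U _ _) _; rewrite card_itv; lia.
  lia.
have hS : #|GS n a m r :&: pre n j| <= m + (minn j n - (n - (r - m))).
  apply: leq_trans (card_sub (_ : GS n a m r :&: pre n j \subset itv n (a - m) a :|: itv n (n - (r - m)) j)) _.
    by apply/subsetP => i; rewrite !inE; lia.
  by apply: leq_trans (card_U _ _) _; rewrite !card_itv; lia.
have hTa : #|T :&: pre n a| <= #|T :&: pre n j|.
  by apply: card_sub; apply/subsetP => i; rewrite !inE; lia.
lia.
Qed.

Lemma exists_between n (F P : {set 'I_n}) k : F \subset P -> #|F| <= k <= #|P| ->
  exists B : {set 'I_n}, [/\ F \subset B, B \subset P & #|B| = k].
Proof.
move=> hFP /andP[h1 h2]; have [e he] : exists e, e = k - #|F| by eexists.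
elim: e F hFP h1 he => [|e IH] F hFP h1 he.
  by exists F; split => //; lia.
have : F \proper P.
  rewrite properEcard hFP /=; have : 0 < k - #|F| by rewrite -he.
  by rewrite subn_gt0 => hk; apply: leq_trans hk h2.
case/properP => _ [x hxP hxF].
have [|||B [hB1 hB2 hB3]] := IH (x |: F).
- by rewrite subUset sub1set hxP.
- rewrite cardsU1 hxF /= add1n; have : 0 < k - #|F| by rewrite -he.
  by rewrite subn_gt0.
- by rewrite cardsU1 hxF /= add1n subnS -he.
by exists B; split => //; apply: subset_trans hB1; apply: subsetUr.
Qed.

Lemma sum_ind n (A B : {set 'I_n}) : \sum_(i in A) (i \in B : nat) = #|A :&: B|.
Proof.
rewrite -sum1_card; symmetry; rewrite (eq_bigl (fun i => (i \in A) && (i \in B))); last by move=> i; rewrite inE.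
rewrite big_mkcondr; apply: eq_bigr => i _; by case: (i \in B).
Qed.

Lemma sum_const_set n (A : {set 'I_n}) (x : 'I_n -> nat) c (p : pred 'I_n) :
  (forall i, i \in A -> p i -> x i = c) ->
  \sum_(i in A | p i) x i = #|[set i in A | p i]| * c.
Proof.
move=> h; rewrite -sum_nat_const; apply: eq_big => [i|i /andP[h1 h2]]; first by rewrite inE.
exact: h.
Qed.

Lemma bounds n (A : {set 'I_n}) (x : 'I_n -> nat) T1 :
  (forall i, x i <= T1) ->
  #|[set i in A | x i == T1]| * T1 <= \sum_(i in A) x i /\
  \sum_(i in A) x i <= #|[set i in A | 0 < x i]| * T1.
Proof.
move=> hx; split.
  rewrite (bigID (fun i => x i == T1)) /= -(@sum_const_set _ A x T1 (fun i => x i == T1)) ?leq_addr //.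
  by move=> i _ /eqP.
rewrite (bigID (fun i => 0 < x i)) /= (@big1 _ _ _ _ _ (fun i => (i \in A) && ~~ (0 < x i))); last first.
  by move=> i /andP[_]; rewrite lt0n negbK => /eqP.
rewrite addn0 -sum_nat_const (eq_bigl (fun i => (i \in A) && (0 < x i))); last by move=> i; rewrite inE.
by apply: leq_sum => i _.
Qed.

Lemma greedy n r a m t (x : 'I_n -> nat) :
  (forall i, x i <= t) -> \sum_i x i = r * t -> m * t <= \sum_(i in pre n a) x i ->
  exists Bs : seq {set 'I_n}, [/\ size Bs = t, all (FamB n r a m) Bs &
     forall i, x i = count (fun B : {set 'I_n} => i \in B) Bs].
Proof.
elim: t x => [|t IH] x hx hs hA.
  exists [::]; split => // i; have := hx i; rewrite leqn0 => /eqP ->. by [].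
set A := pre n a.
set al := \sum_(i in A) x i.
have hsplit : \sum_i x i = al + \sum_(i in ~: A) x i.
  rewrite (bigID (fun i => i \in A)) /=; apply: congr1; apply: eq_bigl => i; by rewrite in_setC.
set be := \sum_(i in ~: A) x i in hsplit.
have [hFA hPA] := bounds A hx.
have [hFC hPC] := bounds (~: A) hx.
rewrite -/al in hFA hPA; rewrite -/be in hFC hPC.
set j := al %/ t.+1.
have hal := divn_eq al t.+1; have hrho := ltn_pmod al (ltn0Sn t).
rewrite -/j in hal.
set fA := #|[set i in A | x i == t.+1]| in hFA.
set pA := #|[set i in A | 0 < x i]| in hPA.
set fC := #|[set i in ~: A | x i == t.+1]| in hFC.
set pC := #|[set i in ~: A | 0 < x i]| in hPC.
set rho := al %% t.+1 in hal hrho.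
have hjm : m <= j by rewrite leq_divRL.
have hfA : fA <= j by rewrite leq_divRL.
have hpA : j <= pA.
  by rewrite -(leq_pmul2r (ltn0Sn t)); apply: leq_trans hPA; rewrite hal leq_addr.
have hjr : j <= r.
  by rewrite -(leq_pmul2r (ltn0Sn t)); rewrite -hs hsplit hal; lia.
have hbe : be + rho = (r - j) * t.+1.
  by rewrite mulnBl -hs hsplit hal; lia.
have hfC : fC <= r - j.
  by rewrite -(leq_pmul2r (ltn0Sn t)) -hbe; lia.
have hpC : r - j <= pC.
  case: (leqP (r - j) pC) => // hlt.
  have : pC.+1 * t.+1 <= (r - j) * t.+1 by rewrite leq_pmul2r.
  rewrite mulSn; lia.
have sub1 : forall (D : {set 'I_n}), [set i in D | x i == t.+1] \subset [set i in D | 0 < x i].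
  by move=> D; apply/subsetP => i; rewrite !inE => /andP[-> /eqP ->].
have e1 : fA <= j <= pA by rewrite hfA hpA.
have e2 : fC <= r - j <= pC by rewrite hfC hpC.
have [BA [hBA1 hBA2 hBA3]] := exists_between (sub1 A) e1.
have [BC [hBC1 hBC2 hBC3]] := exists_between (sub1 (~: A)) e2.
set B := BA :|: BC.
have hBin : forall i, i \in B -> 0 < x i.
  move=> i; rewrite inE => /orP[h|h].
    by move/subsetP: hBA2 => /(_ i h); rewrite inE => /andP[].
  by move/subsetP: hBC2 => /(_ i h); rewrite inE => /andP[].
have hBfull : forall i, x i = t.+1 -> i \in B.
  move=> i hi; rewrite inE; case: (boolP (i \in A)) => hiA.
    by move/subsetP: hBA1 => /(_ i); rewrite in_set hiA hi eqxx => /(_ isT) ->.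
  by move/subsetP: hBC1 => /(_ i); rewrite in_set in_setC hiA hi eqxx => /(_ isT) ->; rewrite orbT.
have hBAA : BA \subset A by apply: subset_trans hBA2 _; apply/subsetP => i; rewrite inE => /andP[].
have hBCA : BC \subset ~: A by apply: subset_trans hBC2 _; apply/subsetP => i; rewrite inE => /andP[].
have hdisj : BA :&: BC = set0.
  apply/setP => i; rewrite !inE; apply/negbTE; apply/andP => -[h1 h2].
  by move/subsetP: hBCA => /(_ i h2); rewrite inE; move/subsetP: hBAA => /(_ i h1) ->.
have hcB : #|B| = r.
  by rewrite cardsU hdisj cards0 subn0 hBA3 hBC3 subnKC.
have hBA : A :&: B = BA.
  apply/setP => i; rewrite in_setI in_setU; apply/idP/idP.
    case/andP => hiA /orP[//|h]; by move/subsetP: hBCA => /(_ i h); rewrite in_setC hiA.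
  by move=> h; move/subsetP: hBAA => /(_ i h) ->; rewrite h.
pose y i := x i - (i \in B).
have hxy : forall i, x i = y i + (i \in B).
  move=> i; rewrite /y subnK //; case: (boolP (i \in B)) => // h; exact: hBin.
have sum_indT : forall (C : {set 'I_n}), \sum_i (i \in C : nat) = #|C|.
  by move=> C; rewrite -sum1_card [RHS]big_mkcond /=; apply: eq_bigr => i _; case: (i \in C).
have hsy : \sum_i y i + r = r * t.+1.
  by rewrite -hs -hcB -sum_indT -big_split /=; apply: eq_bigr => i _; rewrite -hxy.
have hsyA : \sum_(i in A) y i + j = al.
  by rewrite -hBA3 -hBA -sum_ind -big_split /=; apply: eq_bigr => i _; rewrite -hxy.
have [|||Bs [h1 h2 h3]] := IH y.
- move=> i; rewrite /y; case: (boolP (i \in B)) => h /=; first by have := hx i; lia.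
  have := hx i; rewrite leq_eqVlt => /orP[/eqP e|]; last by rewrite subn0 ltnS.
  by rewrite (hBfull i e) in h.
- by rewrite mulnS in hsy; lia.
- have hjt : m * t <= j * t by rewrite leq_mul2r hjm orbT.
  rewrite -/A; rewrite hal in hsyA; rewrite mulnS in hsyA; lia.
exists (B :: Bs); split => /=; first by rewrite h1.
  rewrite h2 andbT /FamB hcB eqxx /=.
  by rewrite setIC -/A hBA hBA3.
by move=> i; rewrite hxy h3 addnC.
Qed.

Lemma sum_count_mem n (s : seq {set 'I_n}) (P : pred {set 'I_n}) (w : {set 'I_n} -> nat) :
  all P s -> \sum_(B | P B) count_mem B s * w B = \sum_(y <- s) w y.
Proof.
elim: s => [|x s IH] /=; first by rewrite big_nil big1 // => B _; rewrite mul0n.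
move=> /andP[hx hs]; rewrite big_cons -IH //.
under eq_bigr do rewrite mulnDl.
rewrite big_split /=; congr addn.
rewrite (bigD1 x) //= eqxx mul1n big1 ?addn0 // => B /andP[_ hB].
by rewrite eq_sym (negbTE hB) mul0n.
Qed.

Lemma sum_mem_count n (s : seq {set 'I_n}) i :
  \sum_(y <- s) (i \in y : nat) = count (fun B : {set 'I_n} => i \in B) s.
Proof. by elim: s => [|x s IH]; rewrite ?big_nil ?big_cons ?IH. Qed.

Import Order.TTheory GRing.Theory Num.Theory.
Local Open Scope ring_scope.

Definition Qpt n r a m t (x : {ffun 'I_n -> int}) : Prop :=
  [/\ forall i, 0 <= x i <= t%:Z, \sum_i x i = (r * t)%N%:Z &
      (m * t)%N%:Z <= \sum_(i in pre n a) x i].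
Arguments Qpt : clear implicits.

Lemma intr_sumE (I : finType) (P : pred I) (F : I -> int) :
  ((\sum_(i | P i) F i)%:~R : rat) = \sum_(i | P i) (F i)%:~R.
Proof. by rewrite (big_morph (fun z : int => (z%:~R : rat)) (@intrD _) (mulr0z 1)). Qed.

Lemma sumPosz (I : finType) (P : pred I) (F : I -> nat) :
  ((\sum_(i | P i) F i)%N : int) = \sum_(i | P i) (F i : int).
Proof. by rewrite -natz natr_sum; apply: eq_bigr => i _; rewrite natz. Qed.

Lemma dil_back n r a m t (x : {ffun 'I_n -> int}) :
  Qpt n r a m t x -> in_dilate (FamB n r a m) t x.
Proof.
case=> hb hs hA.
pose xn i := `|x i|%N.
have hx : forall i, x i = (xn i)%:Z by move=> i; rewrite /xn gez0_abs //; case/andP: (hb i).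
have h1 : forall i, (xn i <= t)%N by move=> i; have := hb i; rewrite hx => /andP[_]; rewrite lez_nat.
have h2 : (\sum_i xn i = r * t)%N.
  have : ((\sum_i xn i)%N : int) = (r * t)%N by rewrite sumPosz -hs; apply: eq_bigr => i _; rewrite hx.
  by move=> /eqP; rewrite eqz_nat => /eqP.
have h3 : (m * t <= \sum_(i in pre n a) xn i)%N.
  rewrite -lez_nat sumPosz; apply: le_trans hA _; rewrite le_eqVlt; apply/orP; left; apply/eqP.
  by apply: eq_bigr => i _; rewrite hx.
have [Bs [hsz hall hcnt]] := greedy h1 h2 h3.
exists (fun B => (count_mem B Bs)%:R); split; [|split].
- by move=> B; rewrite ler0n.
- rewrite -natr_sum; apply/eqP; rewrite eqr_nat; apply/eqP.
  under eq_bigr do rewrite -[count_mem _ _]muln1.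
  by rewrite (@sum_count_mem n Bs _ (fun _ => 1%N)) // sum1_size.
move=> i; rewrite hx.
under eq_bigr do rewrite -natrM.
rewrite -natr_sum (@sum_count_mem n Bs _ (fun B => (i \in B : nat))) // sum_mem_count -hcnt.
by [].
Qed.

Lemma sum_indR n (A B : {set 'I_n}) : \sum_(i in A) ((i \in B)%:R : rat) = #|B :&: A|%:R.
Proof. by rewrite -natr_sum sum_ind setIC. Qed.

Lemma sum_indRT n (B : {set 'I_n}) : \sum_i ((i \in B)%:R : rat) = #|B|%:R.
Proof.
rewrite -natr_sum; congr (_%:R).
by rewrite -sum1_card [RHS]big_mkcond /=; apply: eq_bigr => i _; case: (i \in B).
Qed.

Lemma dil_fwd n r a m t (x : {ffun 'I_n -> int}) :
  in_dilate (FamB n r a m) t x -> Qpt n r a m t x.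
Proof.
case=> lam [hl0 [hsum hx]].
have ht : ((t%:Z)%:~R : rat) = t%:R by [].
split.
- move=> i; apply/andP; split.
    rewrite -(ler0z rat) hx; apply: sumr_ge0 => B _; apply: mulr_ge0 => //; exact: ler0n.
  rewrite -(ler_int rat) hx ht -hsum; apply: ler_sum => B _.
  by case: (i \in B); rewrite ?mulr1 ?mulr0.
- apply: (@intr_inj rat); rewrite intr_sumE.
  under eq_bigr do rewrite hx.
  rewrite exchange_big /=.
  under eq_bigr do rewrite -mulr_sumr sum_indRT.
  rewrite (eq_bigr (fun B => lam B * r%:R)); last first.
    by move=> B /andP[/eqP -> _].
  by rewrite -mulr_suml hsum /= -natrM mulnC.
rewrite -(ler_int rat) intr_sumE.
under eq_bigr do rewrite hx.
rewrite exchange_big /=.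
under eq_bigr do rewrite -mulr_sumr sum_indR.
apply: le_trans (_ : \sum_(B | FamB n r a m B) lam B * m%:R <= _).
  by rewrite -mulr_suml hsum /= -natrM mulnC.
apply: ler_sum => B /andP[_ hB]; apply: ler_wpM2l => //; by rewrite ler_nat.
Qed.

Lemma dil_char n r a m t (x : {ffun 'I_n -> int}) :
  in_dilate (FamB n r a m) t x <-> Qpt n r a m t x.
Proof. by split; [apply: dil_fwd | apply: dil_back]. Qed.
Definition ip1 (f : nat -> rat) := exists p : {poly rat}, forall s, f s = p.[s%:R].

Lemma ip1_ext f g : (forall s, f s = g s) -> ip1 f -> ip1 g.
Proof. by move=> e [p hp]; exists p => s; rewrite -e. Qed.
Lemma ip1_const c : ip1 (fun _ => c).
Proof. by exists c%:P => s; rewrite hornerC. Qed.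
Lemma ip1_id : ip1 (fun s => s%:R).
Proof. by exists 'X => s; rewrite hornerX. Qed.
Lemma ip1_add f g : ip1 f -> ip1 g -> ip1 (fun s => f s + g s).
Proof. by move=> [p hp] [q hq]; exists (p + q) => s; rewrite hornerD hp hq. Qed.
Lemma ip1_mul f g : ip1 f -> ip1 g -> ip1 (fun s => f s * g s).
Proof. by move=> [p hp] [q hq]; exists (p * q) => s; rewrite hornerM hp hq. Qed.
Lemma ip1_opp f : ip1 f -> ip1 (fun s => - f s).
Proof. by move=> [p hp]; exists (- p) => s; rewrite hornerN hp. Qed.
Lemma ip1_exp f i : ip1 f -> ip1 (fun s => f s ^+ i).
Proof.
move=> hf; elim: i => [|i IH]; first exact: (ip1_const 1).
by apply: ip1_ext (ip1_mul hf IH) => s; rewrite exprS.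
Qed.
Lemma ip1_sum m (F : 'I_m -> nat -> rat) : (forall i, ip1 (F i)) ->
  ip1 (fun s => \sum_(i < m) F i s).
Proof.
elim: m F => [|m IH] F hF.
  by apply: ip1_ext (ip1_const 0) => s; rewrite big_ord0.
apply: ip1_ext (ip1_add (IH (fun i => F (widen_ord (leqnSn m) i)) _) (hF ord_max)) => [s|i].
  by rewrite big_ord_recr.
exact: hF.
Qed.

Lemma faulhaber i : ip1 (fun s => \sum_(u < s) (u%:R : rat) ^+ i).
Proof.
elim/ltn_ind: i => i IH.
pose g s := ((i.+1)%:R : rat)^-1 * ((s%:R : rat) ^+ i.+1 -
   \sum_(j < i) 'C(i.+1, j)%:R * \sum_(u < s) (u%:R : rat) ^+ j).
have key : forall s, \sum_(u < s) (u%:R : rat) ^+ i = g s.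
  move=> s; rewrite /g.
  have tel : (s%:R : rat) ^+ i.+1 = \sum_(j < i.+1) 'C(i.+1, j)%:R * \sum_(u < s) (u%:R : rat) ^+ j.
    have := @telescope_sumr rat 0 s (fun u => (u%:R : rat) ^+ i.+1) (leq0n s).
    rewrite expr0n /= subr0 => <-.
    rewrite big_mkord (eq_bigr (fun u : 'I_s => \sum_(j < i.+1) (u%:R : rat) ^+ j *+ 'C(i.+1, j))); last first.
      by move=> u _; rewrite -natr1 exprD1n big_ord_recr /= binn mulr1n addrK.
    rewrite exchange_big /=; apply: eq_bigr => j _; rewrite big_distrr /=.
    by apply: eq_bigr => u _; rewrite mulr_natl.
  rewrite tel big_ord_recr /= addrAC subrr add0r binSn mulKf //.
  by rewrite pnatr_eq0.
apply: (@ip1_ext g) => [s|]; first by rewrite key.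
rewrite /g; apply: ip1_mul; first exact: ip1_const.
apply: ip1_add; first exact: ip1_exp ip1_id.
apply: ip1_opp; apply: ip1_sum => j; apply: ip1_mul; first exact: ip1_const.
exact: IH.
Qed.

Definition ev (P : {poly {poly rat}}) (s t : nat) : rat := (P.[(s%:R)%:P]).[t%:R].
Definition ip2 (f : nat -> nat -> rat) := exists P, forall s t, f s t = ev P s t.

Lemma ip2_ext f g : (forall s t, f s t = g s t) -> ip2 f -> ip2 g.
Proof. by move=> e [p hp]; exists p => s t; rewrite -e. Qed.
Lemma ip2_add f g : ip2 f -> ip2 g -> ip2 (fun s t => f s t + g s t).
Proof. by move=> [p hp] [q hq]; exists (p + q) => s t; rewrite /ev hornerD hornerD hp hq. Qed.
Lemma ip2_mul f g : ip2 f -> ip2 g -> ip2 (fun s t => f s t * g s t).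
Proof. by move=> [p hp] [q hq]; exists (p * q) => s t; rewrite /ev hornerM hornerM hp hq. Qed.
Lemma ip2_opp f : ip2 f -> ip2 (fun s t => - f s t).
Proof. by move=> [p hp]; exists (- p) => s t; rewrite /ev hornerN hornerN hp. Qed.
Lemma ip2_s1 f : ip1 f -> ip2 (fun s t => f s).
Proof.
move=> [p hp]; exists (map_poly polyC p) => s t.
by rewrite /ev (horner_map polyC) hornerC hp.
Qed.
Lemma ip2_t1 f : ip1 f -> ip2 (fun s t => f t).
Proof. by move=> [p hp]; exists (p%:P) => s t; rewrite /ev !hornerC hp. Qed.
Lemma ip2_const c : ip2 (fun _ _ => c).
Proof. exact: (ip2_s1 (ip1_const c)). Qed.
Lemma ip2_exp f i : ip2 f -> ip2 (fun s t => f s t ^+ i).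
Proof.
move=> hf; elim: i => [|i IH]; first exact: (ip2_const 1).
by apply: ip2_ext (ip2_mul hf IH) => s t; rewrite exprS.
Qed.
Lemma ip2_sum m (F : 'I_m -> nat -> nat -> rat) : (forall i, ip2 (F i)) ->
  ip2 (fun s t => \sum_(i < m) F i s t).
Proof.
elim: m F => [|m IH] F hF.
  by apply: ip2_ext (ip2_const 0) => s t; rewrite big_ord0.
apply: ip2_ext (ip2_add (IH (fun i => F (widen_ord (leqnSn m) i)) _) (hF ord_max)) => [s t|i].
  by rewrite big_ord_recr.
exact: hF.
Qed.

Lemma ev_expand P s t : ev P s t = \sum_(i < size P) (P`_i).[t%:R] * (s%:R) ^+ i.
Proof.
rewrite /ev [P.[_]]horner_coef horner_sum; apply: eq_bigr => i _.
by rewrite hornerM -rmorphXn hornerC.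
Qed.

Lemma ip2_subst f (g : nat -> nat -> nat) : ip2 f -> ip2 (fun s t => (g s t)%:R) ->
  ip2 (fun s t => f (g s t) t).
Proof.
move=> [P hP] hg.
apply: (@ip2_ext (fun s t => \sum_(i < size P) (P`_i).[t%:R] * ((g s t)%:R) ^+ i)).
  by move=> s t; rewrite hP ev_expand.
apply: ip2_sum => i; apply: ip2_mul; last exact: ip2_exp.
by apply: ip2_t1; exists P`_i.
Qed.

Lemma ip2_psum f : ip2 f -> ip2 (fun s t => \sum_(u < s) f u t).
Proof.
move=> [P hP].
apply: (@ip2_ext (fun s t => \sum_(i < size P) (P`_i).[t%:R] * \sum_(u < s) (u%:R : rat) ^+ i)).
  move=> s t; under [RHS]eq_bigr do rewrite hP ev_expand.
  rewrite exchange_big /=; apply: eq_bigr => i _; by rewrite big_distrr.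
apply: ip2_sum => i; apply: ip2_mul.
  by apply: ip2_t1; exists P`_i.
exact: ip2_s1 (faulhaber i).
Qed.

Lemma ip2_diag f : ip2 f -> ip1 (fun t => f t t).
Proof.
move=> [P hP].
apply: (@ip1_ext (fun t => \sum_(i < size P) (P`_i).[t%:R] * (t%:R) ^+ i)).
  by move=> t; rewrite hP ev_expand.
apply: ip1_sum => i; apply: ip1_mul; first by exists P`_i.
exact: ip1_exp ip1_id.
Qed.

Lemma ip2_ev P : ip2 (ev P).
Proof. by exists P. Qed.

Lemma ip2_S : ip2 (fun s t => (s.+1)%:R).
Proof. apply: ip2_s1; apply: (@ip1_ext (fun s => s%:R + 1)) => [s|]; first by rewrite natr1.
exact: ip1_add ip1_id (ip1_const 1). Qed.
Lemma ip2_tS : ip2 (fun s t => (t.+1)%:R).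
Proof. apply: ip2_t1; apply: (@ip1_ext (fun s => s%:R + 1)) => [s|]; first by rewrite natr1.
exact: ip1_add ip1_id (ip1_const 1). Qed.

Lemma cntF_poly d c : exists P, forall s t, (0 < s <= t)%N ->
  ((cntF d t (c*t + s))%:R : rat) = ev P s t.
Proof.
elim: d c => [|d IH] c.
  exists 0 => s t /andP[hs _]; rewrite cntF0 /ev !horner0.
  by case: eqP => //; lia.
have [P hP] := IH c.
have hPS : ip2 (fun s t => \sum_(u < s) ev P u.+1 t).
  exact: ip2_psum (@ip2_subst (ev P) (fun s t => s.+1) (ip2_ev P) ip2_S).
case: c hP => [|c'] hP.
  have [R hR] := ip2_add hPS (ip2_const 1).
  exists R => s t hst; rewrite -hR cntF_split // natrD natr_sum; congr (_ + _).
  apply: eq_bigr => u _; rewrite -hP //; have := ltn_ord u; lia.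
have [Q hQ] := IH c'.
have hQS : ip2 (fun s t => \sum_(u < t.+1) ev Q u t).
  exact: (@ip2_subst (fun s t => \sum_(u < s) ev Q u t) (fun s t => t.+1) (ip2_psum (ip2_ev Q)) ip2_tS).
have [R hR] := ip2_add hPS (ip2_add hQS (ip2_opp (ip2_psum (ip2_ev Q)))).
exists R => s t hst; rewrite -hR cntF_split // natrD; congr (_ + _).
  rewrite natr_sum; apply: eq_bigr => u _; rewrite -hP //; have := ltn_ord u; lia.
rewrite -(big_mkord (fun _ => true) (fun u => ev Q u t)).
rewrite -(big_mkord (fun _ => true) (fun u => ev Q u t)).
rewrite (@big_cat_nat _ _ _ s 0 t.+1) //=; last by lia.
rewrite addrAC subrr add0r natr_sum; apply: eq_big_nat => u hu.
rewrite hQ //; lia.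
Qed.

Lemma count_big (T : Type) (P : pred T) (s : seq T) : count P s = (\sum_(y <- s) (P y : nat))%N.
Proof. by elim: s => [|x s IH]; rewrite ?big_nil ?big_cons //= IH. Qed.

Lemma sum_nth (y : seq nat) n : (size y <= n)%N -> (\sum_(i < n) nth 0%N y i)%N = sumn y.
Proof.
elim: y n => [|v y IH] n hs.
  by rewrite big1 // => i _; rewrite nth_nil.
case: n hs => [|n] // hs; rewrite big_ord_recl /= IH //.
Qed.

Lemma sum_nth_take (y : seq nat) n a : size y = n ->
  (\sum_(i in pre n a) nth 0%N y i)%N = sumn (take a y).
Proof.
move=> hs; rewrite -(@sum_nth (take a y) n); last by rewrite size_take; case: ltnP; rewrite hs //; lia.
rewrite big_mkcond /=; apply: eq_bigr => i _; rewrite inE.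
case: ltnP => h; first by rewrite nth_take.
by rewrite nth_default // size_take; case: ltnP => h2; lia.
Qed.

Lemma box_uniq d t : uniq (box d t).
Proof.
elim: d => [|d IH] //; rewrite boxS; apply: allpairs_uniq => //; first exact: iota_uniq.
by move=> [v1 y1] [v2 y2] _ _ /= [-> ->].
Qed.

Definition toffun n (y : seq nat) : {ffun 'I_n -> int} := [ffun i : 'I_n => ((nth 0%N y i)%N : int)].

Lemma lat_fam n r a m t : (a <= n)%N ->
  lattice_count (FamB n r a m) t (Cnt a (n - a) t (r*t) (m*t)).
Proof.
move=> han.
pose Pr (y : seq nat) := (sumn y == r * t)%N && (m * t <= sumn (take a y))%N.
exists [seq toffun n y | y <- box n t & Pr y]; split; [|split].
- rewrite map_inj_in_uniq ?filter_uniq ?box_uniq // => y1 y2.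
  rewrite !mem_filter => /andP[_ h1] /andP[_ h2] e.
  apply: (@eq_from_nth _ 0%N); first by rewrite (size_box h1) (size_box h2).
  move=> i; rewrite (size_box h1) => hi.
  have := congr1 (fun f : {ffun 'I_n -> int} => f (Ordinal hi)) e; rewrite !ffunE /=.
  by case.
- move=> x; rewrite dil_char; split.
    case/mapP => y; rewrite mem_filter => /andP[/andP[/eqP hs hA] hy] ->.
    have hsz := size_box hy.
    move: hy; rewrite mem_box => /andP[_ /allP hall].
    split.
    + move=> i; rewrite ffunE lez_nat /=.
      case: (ltnP i (size y)) => hi; first by apply: hall; apply: mem_nth.
      by rewrite nth_default.
    + rewrite -hs -(@sum_nth y n) ?hsz // sumPosz; apply: eq_bigr => i _; by rewrite ffunE.
    + rewrite -(@sum_nth_take y n) // in hA.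
      apply: le_trans (_ : ((m*t)%N : int) <= ((\sum_(i in pre n a) nth 0%N y i)%N : int)) _.
        by rewrite lez_nat.
      rewrite sumPosz le_eqVlt; apply/orP; left; apply/eqP; apply: eq_bigr => i _; by rewrite ffunE.
  case=> hb hs hA.
  pose y := [seq `|x i|%N | i <- enum 'I_n].
  have hsz : size y = n by rewrite size_map size_enum_ord.
  have hny : forall i : 'I_n, nth 0%N y i = `|x i|%N.
    by move=> i; rewrite (nth_map i) ?size_enum_ord // nth_ord_enum.
  have hxy : forall i, x i = (nth 0%N y i : int).
    by move=> i; rewrite hny gez0_abs //; case/andP: (hb i).
  apply/mapP; exists y; last by apply/ffunP => i; rewrite ffunE hxy.
  rewrite mem_filter mem_box hsz eqxx /=; apply/andP; split; last first.
    apply/allP => v /mapP [i _ ->]; have := hb i; rewrite -lez_nat gez0_abs; first by case/andP.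
    by case/andP: (hb i).
  rewrite /Pr -(@sum_nth y n) ?hsz // -(@sum_nth_take y n) //.
  apply/andP; split.
    rewrite -eqz_nat sumPosz -hs; apply/eqP; apply: eq_bigr => i _; by rewrite hxy.
  rewrite -lez_nat sumPosz; apply: le_trans hA _; rewrite le_eqVlt; apply/orP; left.
  by apply/eqP; apply: eq_bigr => i _; rewrite hxy.
rewrite size_map size_filter count_big -count_fam subnKC //.
Qed.

Lemma lc_ext n (b1 b2 : pred {set 'I_n}) t c : b1 =1 b2 ->
  lattice_count b2 t c -> lattice_count b1 t c.
Proof.
move=> e [s [hu [hm hs]]]; exists s; split => //; split => // x; rewrite hm.
have E : forall F : {set 'I_n} -> rat, \sum_(B | b1 B) F B = \sum_(B | b2 B) F B.
  by move=> F; apply: eq_bigl.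
rewrite /in_dilate; split; case=> lam [h0 [h1 h2]]; exists lam; split => //; split.
- by rewrite E.
- by move=> i; rewrite E.
- by rewrite -E.
- by move=> i; rewrite -E.
Qed.

Lemma lc_GS n S a m r t : (m <= a)%N -> (m <= r)%N -> (a + (r - m) <= n)%N ->
  S = GS n a m r ->
  lattice_count (SM S) t (Cnt a (n - a) t (r*t) (m*t)).
Proof.
move=> h1 h2 h3 ->; apply: lc_ext (SM_GS h1 h2 h3) _.
apply: lat_fam; lia.
Qed.

Lemma ipS : ip2 (fun s t => (s.+1)%:R).
Proof. exact: ip2_S. Qed.

Local Close Scope ring_scope.

Section Counts.
Variables (k n : nat) (hk : 2 <= k) (hkn : k + 2 <= n).

Lemma LSp t : lattice_count (Spkn k n) t (Cnt k (n - k) t ((n - k) * t) (1 * t)).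
Proof.
apply: lc_GS; try lia.
apply/setP => i; rewrite !inE /=; have hi := ltn_ord i; apply/idP/idP; lia.
Qed.

Lemma LSq t : lattice_count (Spkn (n - k) n) t (Cnt (n - k) k t (k * t) (1 * t)).
Proof.
have h := @lc_GS n [set i : 'I_n | ((val i).+1 == (n - k)) || ((n - k) + 2 <= (val i).+1)] (n - k) 1 k t.
rewrite subKn in h; last by lia.
apply: h; try lia.
apply/setP => i; rewrite !inE /=; have hi := ltn_ord i; apply/idP/idP; lia.
Qed.

Lemma LU t : lattice_count (Ukn k n) t (cntF n t (k * t)).
Proof.
have := @lc_GS n [set i : 'I_n | (n - k + 1 <= (val i).+1)] 0 0 k t.
rewrite mul0n -conv (_ : 0 + (n - 0) = n); last by rewrite add0n subn0.
apply; try lia.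
apply/setP => i; rewrite !inE /=; have hi := ltn_ord i; apply/idP/idP; lia.
Qed.

Lemma LT t : lattice_count (Tkn k n) t (Tsum k (n - k) t).
Proof.
rewrite -I3; last by lia.
apply: lc_GS; try lia.
apply/setP => i; rewrite !inE /=; have hi := ltn_ord i; apply/idP/idP; lia.
Qed.

Lemma CSp t : Cnt k (n - k) t ((n - k) * t) (1 * t) = Cnt (n - k) k t (k * t) t.
Proof. by rewrite I1 mul1n. Qed.

Lemma CI2 t : cntF n t.+1 (k * t.+1) = Cnt (n - k) k t.+1 (k * t.+1) t.+1 + Tsum k (n - k) t.
Proof. by rewrite -I2; [rewrite subnK //; lia | lia]. Qed.

Lemma kt_eq t : (k - 1) * t + t = k * t.
Proof. by rewrite mulnBl mul1n subnK // leq_pmull //; lia. Qed.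

End Counts.

Local Open Scope ring_scope.

Unset Implicit Arguments.

Theorem lemma6p2 (k n : nat) (hk : (2 <= k)%N) (hkn : (k + 2 <= n)%N) :
  exists p1 p2 p3 p4 : {poly rat},
    [/\ ehrhart_poly (Spkn k n) p1, ehrhart_poly (Spkn (n - k) n) p2,
        ehrhart_poly (Ukn k n) p3, ehrhart_poly (Tkn k n) p4 &
        p1 = p2 /\ p1 = p3 - (p4 \Po ('X - 1))].
Proof.
have [PU hPU] := cntF_poly n (k - 1)%N.
have [p3 hp3] := ip2_diag (ip2_ev PU).
have hU : forall t, (0 < t)%N -> p3.[t%:R] = (cntF n t (k * t)%N)%:R.
  move=> t ht; rewrite -hp3 -hPU; last by rewrite ht leqnn.
  by congr (_ %:R); congr (cntF _ _ _); exact: (kt_eq hk hkn t).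
have [Pk hPk] := cntF_poly k 0.
have [Pb hPb] := cntF_poly (n - k)%N 0.
have hT2 : ip2 (fun s t => 1 + \sum_(u < s) ev Pk u.+1 t * ev Pb u.+1 t).
  apply: (@ip2_add (fun _ _ => 1) (fun s t => \sum_(u < s) ev Pk u.+1 t * ev Pb u.+1 t)); first exact: ip2_const.
  apply: (@ip2_psum (fun u t => ev Pk u.+1 t * ev Pb u.+1 t)).
  apply: (@ip2_mul (fun s t => ev Pk s.+1 t) (fun s t => ev Pb s.+1 t)).
    exact: (@ip2_subst (ev Pk) (fun s t => s.+1) (ip2_ev Pk) ip2_S).
  exact: (@ip2_subst (ev Pb) (fun s t => s.+1) (ip2_ev Pb) ip2_S).
have [p4 hp4] := ip2_diag hT2.
have hT : forall t, p4.[t%:R] = (Tsum k (n - k)%N t)%:R.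
  move=> t; rewrite -hp4 /Tsum big_ord_recl /= !cntF_zero muln1 natrD natr_sum.
  congr (_ + _); apply: eq_bigr => u _.
  have hu : (0 < u.+1 <= t)%N by rewrite ltn0Sn /=; exact: ltn_ord.
  by rewrite natrM -(hPk _ _ hu) -(hPb _ _ hu).
pose p1 := p3 - (p4 \Po ('X - 1)).
have hSp : forall t, (0 < t)%N -> p1.[t%:R] = (Cnt (n - k) k t (k * t)%N t)%:R.
  case=> // t _; rewrite /p1 hornerD hornerN horner_comp !hornerE -natr1 addrK natr1.
  by rewrite hU // hT (CI2 hk hkn) natrD addrK.
exists p1, p1, p3, p4; split => //.
- move=> t ht; exists (Cnt k (n - k) t ((n - k) * t)%N (1 * t)%N); split; first exact: LSp.
  by rewrite CSp hSp.
- move=> t ht; exists (Cnt (n - k) k t (k * t)%N (1 * t)%N); split; first exact: LSq.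
  by rewrite mul1n hSp.
- by move=> t ht; exists (cntF n t (k * t)%N); split; [exact: LU | rewrite hU].
- by move=> t ht; exists (Tsum k (n - k) t); split; [exact: LT | rewrite hT].
Qed.
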